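(* Define $p_0=1$, $q_0=2$, and for $k\ge1$, $p_k=2q_{k-1}$ and $q_k=3q_{k-1}-1$. Let $T_k=\{p_k,p_k+1,\ldots,q_k\}$ and $T=\bigcup_{k\ge0}T_k$. For each $k$, let $\tau_k$ be a permutation of $T_k$ containing no 3-term arithmetic progression as a subsequence. Then: (a) the concatenation $\tau_0\tau_1\tau_2\cdots$ contains no 3-term arithmetic progression as a subsequence, so $T$ is 3-free; (b) $\overline{d}(T)=1/2$ and $\underline{d}(T)=1/4$.
   Context: A sequence contains a $k$-term arithmetic progression as a subsequence if there are positions $i_1<\cdots<i_k$ whose entries satisfy $a_{i_{m+1}}-a_{i_m}=d$ for all $m$, for some fixed $d\neq0$ (positive or negative). A set $S$ of positive integers is $n$-free if its elements can be listed in a sequence, each element appearing exactly once, that contains no $n$-term arithmetic progression as a subsequence. For $S\subseteq\mathbb{Z}_{>0}$ with $A(n)=|S\cap[1,n]|$, the upper density is $\overline{d}(S)=\limsup_{n\to\infty}A(n)/n$ and the lower density is $\underline{d}(S)=\liminf_{n\to\infty}A(n)/n$. Every finite set of consecutive integers admits a permutation with no 3-term arithmetic progression as a subsequence. *)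

(* Defs.v *)
From Stdlib Require Import Reals Lra Lia ZArith Arith List Permutation.
Import ListNotations.

Fixpoint pq (k : nat) : nat * nat :=
  match k with
  | 0 => (1, 2)
  | S k' => let q := snd (pq k') in (2 * q, 3 * q - 1)
  end.
Definition p (k : nat) : nat := fst (pq k).
Definition q (k : nat) : nat := snd (pq k).

Definition Tk (k : nat) : list nat := seq (p k) (q k - p k + 1).

Definition inT (x : nat) : Prop := exists k, p k <= x <= q k.

Definition has_AP_list (n : nat) (l : list nat) : Prop :=
  exists (idx : nat -> nat) (d : Z), d <> 0%Z /\
    (forall m, m < n -> idx m < length l) /\
    (forall m, S m < n -> idx m < idx (S m)) /\
    (forall m, S m < n ->
       (Z.of_nat (nth (idx (S m)) l 0%nat) - Z.of_nat (nth (idx m) l 0%nat))%Z = d).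

Definition has_AP_fun (n : nat) (a : nat -> nat) : Prop :=
  exists (idx : nat -> nat) (d : Z), d <> 0%Z /\
    (forall m, S m < n -> idx m < idx (S m)) /\
    (forall m, S m < n ->
       (Z.of_nat (a (idx (S m))) - Z.of_nat (a (idx m)))%Z = d).

(* S is n-free: its elements can be listed (finitely or as an infinite
   sequence), each exactly once, with no n-term AP subsequence. *)
Definition n_free (n : nat) (S : nat -> Prop) : Prop :=
  (exists l : list nat, NoDup l /\ (forall x, In x l <-> S x) /\ ~ has_AP_list n l)
  \/
  (exists a : nat -> nat, (forall i j, a i = a j -> i = j) /\
     (forall x, S x <-> exists i, a i = x) /\ ~ has_AP_fun n a).

(* Infinite concatenation tau 0 ++ tau 1 ++ tau 2 ++ ... evaluated at
   position n (valid when every block is nonempty, which gives enough fuel). *)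
Fixpoint cat_aux (tau : nat -> list nat) (k fuel n : nat) : nat :=
  match fuel with
  | 0 => 0
  | S f => if Nat.ltb n (length (tau k)) then nth n (tau k) 0
           else cat_aux tau (S k) f (n - length (tau k))
  end.
Definition concat_seq (tau : nat -> list nat) (n : nat) : nat :=
  cat_aux tau 0 (S n) n.

Definition countA (S : nat -> bool) (n : nat) : nat :=
  length (filter S (seq 1 n)).

Definition ratio (S : nat -> bool) (n : nat) : R := INR (countA S n) / INR n.

Definition is_limsup (u : nat -> R) (l : R) : Prop :=
  (forall eps : R, (eps > 0)%R -> exists N, forall n, (n >= N)%nat -> (u n < l + eps)%R) /\
  (forall eps : R, (eps > 0)%R -> forall N, exists n, (n >= N)%nat /\ (u n > l - eps)%R).
Definition is_liminf (u : nat -> R) (l : R) : Prop :=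
  (forall eps : R, (eps > 0)%R -> exists N, forall n, (n >= N)%nat -> (u n > l - eps)%R) /\
  (forall eps : R, (eps > 0)%R -> forall N, exists n, (n >= N)%nat /\ (u n < l + eps)%R).

(* Main.v *)
Require Import Defs.
From Stdlib Require Import Reals Lra Lia Psatz ZArith Arith List Permutation.

Lemma pS k : p (S k) = 2 * q k. Proof. reflexivity. Qed.
Lemma qS k : q (S k) = 3 * q k - 1. Proof. reflexivity. Qed.
Lemma p0 : p 0 = 1. Proof. reflexivity. Qed.
Lemma q0 : q 0 = 2. Proof. reflexivity. Qed.
Lemma q_ge2 k : 2 <= q k.
Proof. induction k; [rewrite q0; lia | rewrite qS; lia]. Qed.
Lemma p_lt_q k : p k < q k.
Proof. destruct k; [rewrite p0, q0; lia| rewrite pS, qS; pose proof (q_ge2 k); lia]. Qed.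
Lemma p_ge1 k : 1 <= p k.
Proof. destruct k; [rewrite p0; lia| rewrite pS; pose proof (q_ge2 k); lia]. Qed.
Lemma q_mono k k' : k <= k' -> q k <= q k'.
Proof. induction 1; auto. rewrite qS; pose proof (q_ge2 m); lia. Qed.
Lemma p_mono k k' : k <= k' -> p k <= p k'.
Proof. induction 1; auto. rewrite pS; pose proof (p_lt_q m); lia. Qed.
Lemma q_grow k : (k+1)*(k+1) + 2 <= 2 * q k.
Proof. induction k. rewrite q0; lia. rewrite qS. pose proof (q_ge2 k). nia. Qed.
Lemma q_ge_k k : k <= q k.
Proof. pose proof (q_grow k). assert (k+1 <= (k+1)*(k+1)) by nia. lia. Qed.
Lemma blk_lt k k' : k < k' -> 2 * q k <= p k'.
Proof. intros H. rewrite <- pS. apply p_mono; lia. Qed.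
Lemma blk_unique k k' x : p k <= x <= q k -> p k' <= x <= q k' -> k = k'.
Proof.
  intros H1 H2. destruct (lt_eq_lt_dec k k') as [[h|h]|h]; auto.
  - pose proof (blk_lt _ _ h); pose proof (q_ge2 k); pose proof (q_ge2 k'); lia.
  - pose proof (blk_lt _ _ h); pose proof (q_ge2 k); pose proof (q_ge2 k'); lia.
Qed.

Fixpoint off (tau : nat -> list nat) (k : nat) : nat :=
  match k with 0 => 0 | S k' => off tau k' + length (tau k') end.

Lemma len_tau tau (Hp : forall k, Permutation (tau k) (Tk k)) k :
  length (tau k) = q k - p k + 1.
Proof. rewrite (Permutation_length (Hp k)). unfold Tk. apply length_seq. Qed.

Lemma in_tau tau (Hp : forall k, Permutation (tau k) (Tk k)) k x :
  In x (tau k) <-> p k <= x <= q k.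
Proof.
  pose proof (p_lt_q k). split; intro Hx.
  - apply (Permutation_in _ (Hp k)) in Hx. unfold Tk in Hx. apply in_seq in Hx. lia.
  - apply (Permutation_in _ (Permutation_sym (Hp k))). unfold Tk. apply in_seq. lia.
Qed.

Lemma off_mono tau k k' : k <= k' -> off tau k <= off tau k'.
Proof. induction 1; simpl; lia. Qed.

Lemma cat_aux_spec tau (Hl : forall k, 1 <= length (tau k)) :
  forall j k m fuel, off tau (k+j) <= off tau k + m < off tau (k+j) + length (tau (k+j)) ->
  m < fuel -> cat_aux tau k fuel m = nth (off tau k + m - off tau (k+j)) (tau (k+j)) 0.
Proof.
  induction j; intros k m fuel H Hf.
  - destruct fuel as [|f]; [lia|]. simpl. rewrite Nat.add_0_r in *.
    replace (Nat.ltb m (length (tau k))) with true by (symmetry; apply Nat.ltb_lt; lia).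
    f_equal; lia.
  - destruct fuel as [|f]; [lia|]. simpl.
    assert (Ho : off tau (S k) <= off tau (k + S j))
    by (apply off_mono; lia).
    simpl in Ho.
    replace (Nat.ltb m (length (tau k))) with false by (symmetry; apply Nat.ltb_ge; lia).
    replace (k + S j) with (S k + j) in * by lia.
    rewrite (IHj (S k)); simpl. f_equal; lia. all: simpl in *. all: pose proof (Hl k). all: lia.
Qed.


Lemma concat_spec tau (Hl : forall k, 1 <= length (tau k)) k n :
  off tau k <= n < off tau (S k) ->
  concat_seq tau n = nth (n - off tau k) (tau k) 0.
Proof.
  intros H. unfold concat_seq. simpl in H.
  rewrite (cat_aux_spec tau Hl k 0 n (S n)); simpl; [reflexivity| lia | lia].
Qed.

Lemma blk_exists tau (Hl : forall k, 1 <= length (tau k)) n :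
  exists k, off tau k <= n < off tau (S k).
Proof.
  induction n.
  - exists 0. simpl. pose proof (Hl 0). lia.
  - destruct IHn as [k Hk]. destruct (Nat.eq_dec (S n) (off tau (S k))).
    + exists (S k). simpl in *. pose proof (Hl (S k)). lia.
    + exists k. simpl in *. lia.
Qed.

Lemma blk_mono tau k1 k2 n1 n2 :
  off tau k1 <= n1 < off tau (S k1) -> off tau k2 <= n2 < off tau (S k2) ->
  n1 <= n2 -> k1 <= k2.
Proof.
  intros H1 H2 H. destruct (le_lt_dec k1 k2); auto.
  pose proof (off_mono tau (S k2) k1 l). lia.
Qed.

Lemma Hl_of tau (Hp : forall k, Permutation (tau k) (Tk k)) k : 1 <= length (tau k).
Proof. rewrite (len_tau tau Hp). lia. Qed.

Lemma concat_range tau (Hp : forall k, Permutation (tau k) (Tk k)) k n :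
  off tau k <= n < off tau (S k) -> p k <= concat_seq tau n <= q k.
Proof.
  intros H. rewrite (concat_spec tau (Hl_of tau Hp) k n H).
  apply (in_tau tau Hp). apply nth_In. simpl in H. lia.
Qed.

Lemma no_AP tau (Hp : forall k, Permutation (tau k) (Tk k))
  (Hf : forall k, ~ has_AP_list 3 (tau k)) : ~ has_AP_fun 3 (concat_seq tau).
Proof.
  intros [idx [d [Hd [Hinc Hdiff]]]].
  pose proof (Hinc 0 ltac:(lia)) as I0. pose proof (Hinc 1 ltac:(lia)) as I1.
  pose proof (Hdiff 0 ltac:(lia)) as D0. pose proof (Hdiff 1 ltac:(lia)) as D1.
  pose proof (Hl_of tau Hp) as Hl.
  destruct (blk_exists tau Hl (idx 0)) as [k0 B0].
  destruct (blk_exists tau Hl (idx 1)) as [k1 B1].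
  destruct (blk_exists tau Hl (idx 2)) as [k2 B2].
  pose proof (blk_mono tau _ _ _ _ B0 B1 ltac:(lia)) as M01.
  pose proof (blk_mono tau _ _ _ _ B1 B2 ltac:(lia)) as M12.
  pose proof (concat_range tau Hp _ _ B0) as R0.
  pose proof (concat_range tau Hp _ _ B1) as R1.
  pose proof (concat_range tau Hp _ _ B2) as R2.
  set (a := concat_seq tau (idx 0)) in *.
  set (b := concat_seq tau (idx 1)) in *.
  set (c := concat_seq tau (idx 2)) in *.
  assert (E : a + c = 2 * b) by lia.
  destruct (Nat.eq_dec k0 k1) as [e01|n01].
  - subst k1. destruct (Nat.eq_dec k0 k2) as [e02|n02].
    + subst k2. apply (Hf k0). exists (fun m => idx m - off tau k0), d.
      split; [exact Hd|]. simpl in B0, B1, B2. split; [|split].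
      * intros m Hm. destruct m as [|[|[|m]]]; try lia.
      * intros m Hm. destruct m as [|[|m]]; try lia.
      * intros m Hm. destruct m as [|[|m]]; try lia.
        -- rewrite <- (concat_spec tau Hl k0 (idx 1)), <- (concat_spec tau Hl k0 (idx 0)); simpl; try lia.
        -- rewrite <- (concat_spec tau Hl k0 (idx 2)), <- (concat_spec tau Hl k0 (idx 1)); simpl; try lia.
    + assert (k0 < k2) by lia. pose proof (blk_lt _ _ H).
      pose proof (p_ge1 k0). lia.
  - assert (k0 < k1) by lia. destruct k1 as [|j]; [lia|].
    pose proof (q_mono k0 j ltac:(lia)). rewrite pS in R1.
    destruct (Nat.eq_dec (S j) k2) as [e|ne].
    + subst k2. rewrite pS, qS in R2. pose proof (q_ge2 j). lia.
    + assert (S j < k2) by lia. pose proof (blk_lt _ _ H1).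
      pose proof (p_ge1 k0). pose proof (p_ge1 (S j)). rewrite pS in *. lia.
Qed.

Lemma free3 tau (Hp : forall k, Permutation (tau k) (Tk k))
  (Hf : forall k, ~ has_AP_list 3 (tau k)) : n_free 3 inT.
Proof.
  pose proof (Hl_of tau Hp) as Hl.
  right. exists (concat_seq tau). split; [|split].
  - intros i j E.
    destruct (blk_exists tau Hl i) as [ki Bi].
    destruct (blk_exists tau Hl j) as [kj Bj].
    pose proof (concat_range tau Hp _ _ Bi). pose proof (concat_range tau Hp _ _ Bj).
    assert (ki = kj) by (apply (blk_unique ki kj (concat_seq tau i)); lia). subst kj.
    rewrite (concat_spec tau Hl ki i Bi), (concat_spec tau Hl ki j Bj) in E.
    assert (ND : NoDup (tau ki)) by
      (apply (Permutation_NoDup (Permutation_sym (Hp ki))); apply seq_NoDup).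
    simpl in Bi, Bj. pose proof (proj1 (NoDup_nth (tau ki) 0) ND (i - off tau ki) (j - off tau ki) ltac:(lia) ltac:(lia) E). lia.
  - intros x. split.
    + intros [k Hk]. apply (in_tau tau Hp) in Hk.
      destruct (In_nth _ _ 0 Hk) as [n [Hn Hx]].
      exists (off tau k + n). rewrite (concat_spec tau Hl k); simpl; [|lia].
      rewrite <- Hx; f_equal; lia.
    + intros [i Hi]. destruct (blk_exists tau Hl i) as [k Bk].
      exists k. rewrite <- Hi. apply (concat_range tau Hp _ _ Bk).
  - apply no_AP; auto.
Qed.

Lemma C_S Tb n : countA Tb (S n) = countA Tb n + (if Tb (S n) then 1 else 0).
Proof.
  unfold countA. rewrite seq_S, filter_app, length_app. simpl.
  destruct (Tb (S n)); simpl; lia.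
Qed.

Lemma C_0 Tb : countA Tb 0 = 0. Proof. reflexivity. Qed.



Lemma Tb_in Tb (HTb : forall x, Tb x = true <-> inT x) k x :
  p k <= x <= q k -> Tb x = true.
Proof. intros H. apply HTb. exists k; exact H. Qed.

Lemma Tb_gap Tb (HTb : forall x, Tb x = true <-> inT x) k x :
  q k < x < p (S k) -> Tb x = false.
Proof.
  intros H. destruct (Tb x) eqn:E; auto. apply HTb in E. destruct E as [j Hj].
  destruct (le_lt_dec j k).
  - pose proof (q_mono j k l); lia.
  - pose proof (p_mono (S k) j l); lia.
Qed.

Lemma C_gap Tb (HTb : forall x, Tb x = true <-> inT x) k m :
  q k + m < p (S k) -> countA Tb (q k + m) = countA Tb (q k).
Proof.
  induction m; intros H. rewrite Nat.add_0_r; auto.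
  rewrite Nat.add_succ_r, C_S, (Tb_gap Tb HTb k); [|lia]. rewrite IHm; lia.
Qed.

Lemma C_blk Tb (HTb : forall x, Tb x = true <-> inT x) k m :
  m <= q (S k) - p (S k) + 1 ->
  countA Tb (p (S k) - 1 + m) = countA Tb (p (S k) - 1) + m.
Proof.
  pose proof (p_ge1 (S k)). pose proof (p_lt_q (S k)).
  induction m; intros H1. rewrite Nat.add_0_r; auto.
  rewrite Nat.add_succ_r, C_S, (Tb_in Tb HTb (S k)); [|lia]. rewrite IHm; lia.
Qed.

Lemma C_q Tb (HTb : forall x, Tb x = true <-> inT x) k :
  4 * countA Tb (q k) = 2 * q k + 4 + 2 * k.
Proof.
  induction k.
  - rewrite q0. change 2 with (S (S 0)). rewrite !C_S, C_0.
    rewrite (Tb_in Tb HTb 0 1), (Tb_in Tb HTb 0 2); rewrite ?p0, ?q0; lia.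
  - pose proof (q_ge2 k).
    assert (E1 : p (S k) - 1 = q k + (p (S k) - 1 - q k)) by (rewrite pS; lia).
    assert (E2 : countA Tb (p (S k) - 1) = countA Tb (q k)).
    { rewrite E1. apply C_gap; auto. rewrite pS; lia. }
    pose proof (C_blk Tb HTb k (q (S k) - p (S k) + 1) ltac:(lia)) as E3.
    replace (p (S k) - 1 + (q (S k) - p (S k) + 1)) with (q (S k)) in E3
      by (pose proof (p_lt_q (S k)); pose proof (p_ge1 (S k)); lia).
    rewrite E3, E2. rewrite qS, pS in *. lia.
Qed.

Lemma C_form Tb (HTb : forall x, Tb x = true <-> inT x) n k :
  q k <= n < q (S k) ->
  (n < p (S k) /\ countA Tb n = countA Tb (q k)) \/
  (p (S k) <= n /\ countA Tb n = countA Tb (q k) + n + 1 - p (S k)).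
Proof.
  intros H. pose proof (q_ge2 k).
  assert (E2 : countA Tb (p (S k) - 1) = countA Tb (q k)).
  { replace (p (S k) - 1) with (q k + (p (S k) - 1 - q k)) by (rewrite pS; lia).
    apply C_gap; auto. rewrite pS; lia. }
  destruct (lt_dec n (p (S k))).
  - left. split; auto. replace n with (q k + (n - q k)) by lia. apply C_gap; auto; lia.
  - right. split; [lia|]. pose proof (p_ge1 (S k)).
    replace n with (p (S k) - 1 + (n + 1 - p (S k))) by lia.
    rewrite (C_blk Tb HTb k); [| lia]. rewrite E2. lia.
Qed.

Lemma q_exists n : 2 <= n -> exists k, q k <= n < q (S k).
Proof.
  induction n; intros H; [lia|].
  destruct (Nat.eq_dec n 1) as [e|ne].
  - subst. exists 0. rewrite qS, q0. lia.
  - destruct IHn as [k Hk]; [lia|].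
    destruct (Nat.eq_dec (S n) (q (S k))) as [e|ne2].
    + exists (S k). rewrite (qS (S k)). pose proof (q_ge2 (S k)). lia.
    + exists k. lia.
Qed.

Lemma C_upper Tb (HTb : forall x, Tb x = true <-> inT x) n k :
  q k <= n < q (S k) -> 2 * countA Tb n <= n + k + 3.
Proof.
  intros H. pose proof (C_q Tb HTb k). rewrite qS in H.
  destruct (C_form Tb HTb n k) as [[A B]|[A B]]; [rewrite qS; lia| |]; rewrite pS in *; lia.
Qed.

Lemma C_lower Tb (HTb : forall x, Tb x = true <-> inT x) n :
  1 <= n -> n <= 4 * countA Tb n.
Proof.
  intros H. destruct (Nat.eq_dec n 1) as [e|ne].
  - subst. change 1 with (S 0) at 2. rewrite C_S, C_0, (Tb_in Tb HTb 0 1); rewrite ?p0, ?q0; lia.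
  - destruct (q_exists n) as [k Hk]; [lia|]. pose proof (C_q Tb HTb k).
    destruct (C_form Tb HTb n k Hk) as [[A B]|[A B]]; rewrite pS in *; lia.
Qed.

Lemma L_le (C n M a : nat) : (0 < n)%nat -> (0 < M)%nat -> (0 < a)%nat ->
  (a * C * M <= n * M + a * n)%nat -> (INR C / INR n <= 1 / INR a + / INR M)%R.
Proof.
  intros Hn HM Ha H. apply le_INR in H. rewrite !plus_INR, !mult_INR in H.
  apply lt_0_INR in Hn. apply lt_0_INR in HM. apply lt_0_INR in Ha.
  apply Rmult_le_reg_r with (r := (INR n * INR M * INR a)%R).
  { apply Rmult_lt_0_compat; [apply Rmult_lt_0_compat|]; auto. }
  replace (INR C / INR n * (INR n * INR M * INR a))%R with (INR a * INR C * INR M)%R by (field; lra).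
  replace ((1 / INR a + / INR M) * (INR n * INR M * INR a))%R with (INR n * INR M + INR a * INR n)%R
    by (field; lra).
  exact H.
Qed.

Lemma L_ge (C n a : nat) : (0 < n)%nat -> (0 < a)%nat ->
  (n <= a * C)%nat -> (INR C / INR n >= 1 / INR a)%R.
Proof.
  intros Hn Ha H. apply le_INR in H. rewrite !mult_INR in H.
  apply lt_0_INR in Hn. apply lt_0_INR in Ha. apply Rle_ge.
  apply Rmult_le_reg_r with (r := (INR n * INR a)%R).
  { apply Rmult_lt_0_compat; auto. }
  replace (INR C / INR n * (INR n * INR a))%R with (INR a * INR C)%R by (field; lra).
  replace (1 / INR a * (INR n * INR a))%R with (INR n)%R by (field; lra).
  exact H.
Qed.

Lemma INR2 : INR 2 = 2%R. Proof. simpl; lra. Qed.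
Lemma INR4 : INR 4 = 4%R. Proof. simpl; lra. Qed.

Lemma dens Tb (HTb : forall x, Tb x = true <-> inT x) :
  is_limsup (ratio Tb) (1/2)%R /\ is_liminf (ratio Tb) (1/4)%R.
Proof.
  unfold ratio. split; split.
  - intros eps He. destruct (archimed_cor1 eps He) as [M [HM HM0]].
    exists ((3*M+2)*M + 2)%nat. intros n Hn.
    destruct (q_exists n) as [k Hk]; [lia|].
    pose proof (C_upper Tb HTb n k Hk). pose proof (q_grow k).
    assert (Hkm : ((k+3)*M <= 2*n)%nat).
    { destruct (le_lt_dec (3*M) (k+1)).
      - assert ((k+3)*M <= 3*(k+1)*M)%nat by nia.
        assert (3*M*(k+1) <= (k+1)*(k+1))%nat by nia. nia.
      - nia. }
    pose proof (L_le (countA Tb n) n M 2 ltac:(lia) HM0 ltac:(lia) ltac:(nia)).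
    rewrite INR2 in H1. lra.
  - intros eps He N. exists (q N). split; [pose proof (q_ge_k N); lia|].
    pose proof (C_q Tb HTb N). pose proof (q_ge2 N).
    pose proof (L_ge (countA Tb (q N)) (q N) 2 ltac:(lia) ltac:(lia) ltac:(lia)).
    rewrite INR2 in H1. lra.
  - intros eps He. exists 1%nat. intros n Hn.
    pose proof (L_ge (countA Tb n) n 4 ltac:(lia) ltac:(lia) (C_lower Tb HTb n Hn)).
    rewrite INR4 in H. lra.
  - intros eps He N. destruct (archimed_cor1 eps He) as [M [HM HM0]].
    set (k := (N + 2*M)%nat). exists (2 * q k - 1)%nat.
    pose proof (q_ge2 k). pose proof (q_ge_k k). pose proof (q_grow k).
    split; [unfold k in *; lia|].
    assert (E : countA Tb (2 * q k - 1) = countA Tb (q k)).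
    { replace (2 * q k - 1)%nat with (q k + (q k - 1))%nat by lia.
      apply C_gap; auto. rewrite pS. lia. }
    pose proof (C_q Tb HTb k). rewrite E.
    assert (2*M <= k+1)%nat by (unfold k; lia).
    assert (2*((5+2*k)*M) <= 5*(k+1)*(k+1))%nat by nia.
    pose proof (L_le (countA Tb (q k)) (2 * q k - 1) M 4 ltac:(lia) HM0 ltac:(lia) ltac:(nia)).
    rewrite INR4 in H5. lra.
Qed.

Theorem mainTheorem9
  (tau : nat -> list nat)
  (Htau_perm : forall k, Permutation (tau k) (Tk k))
  (Htau_free : forall k, ~ has_AP_list 3 (tau k))
  (Tb : nat -> bool)
  (HTb : forall x, Tb x = true <-> inT x) :
  (~ has_AP_fun 3 (concat_seq tau) /\ n_free 3 inT) /\
  (is_limsup (ratio Tb) (1/2)%R /\ is_liminf (ratio Tb) (1/4)%R).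
Proof.
  split; [split|].
  - apply no_AP; auto.
  - apply (free3 tau); auto.
  - apply dens; auto.
Qed.
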